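(* Let $A=\mathbb Q[x_1,x_2,\dots]$ with $\deg x_n=n$, let $d$ be the derivation of $A$ with $d x_n=x_{n-1}$ for $n\ge2$ and $d x_1=0$, and let $J=\ker d=\bigoplus_n J_n$ with the induced grading. Then the Poincaré series $J(t)=\sum_{n\ge0}(\dim J_n)t^n$ is $$J(t)=\frac{1}{(1-t^2)(1-t^3)(1-t^4)\cdots}+t .$$ *)

(* Defs.v *)
From mathcomp Require Import all_boot all_algebra.
From mathcomp Require Import mpoly.
Set Implicit Arguments. Unset Strict Implicit. Unset Printing Implicit Defensive.
Import GRing.Theory.
Local Open Scope ring_scope.

(* The polynomial ring Q[x_1, ..., x_N]; the variable 'X_i (i : 'I_N)
   stands for x_(i+1), of weight i+1. *)

Definition wdeg (N : nat) (m : 'X_{1..N}) : nat := (\sum_(i < N) i.+1 * m i)%N.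

(* p is homogeneous of weighted degree n (0 is homogeneous of every degree) *)
Definition whomog (N n : nat) (p : {mpoly rat[N]}) : bool :=
  all (fun m => wdeg m == n) (msupp p).

(* the derivation d with d x_1 = 0, d x_k = x_(k-1) (k >= 2):
   d p = sum_{k >= 2} x_(k-1) * dp/dx_k *)
Definition dA (N : nat) (p : {mpoly rat[N]}) : {mpoly rat[N]} :=
  \sum_(j < N) \sum_(i < N | nat_of_ord i == j.+1) 'X_j * p^`M(i).

Definition Jdeg (N n : nat) (p : {mpoly rat[N]}) : Prop :=
  whomog n p /\ dA p = 0.

Definition has_dim (N : nat) (S : {mpoly rat[N]} -> Prop) (k : nat) : Prop :=
  exists b : 'I_k -> {mpoly rat[N]},
    [/\ (forall i, S (b i)),
        (forall c : 'I_k -> rat, \sum_(i < k) c i *: b i = 0 -> forall i, c i = 0)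
      & (forall p, S p -> exists c : 'I_k -> rat, p = \sum_(i < k) c i *: b i)].

(* coefficient of t^n in 1/((1-t^2)(1-t^3)...) + t, computed by expanding each
   1/(1-t^k) as a geometric series truncated at degree n (factors with k > n
   and terms of degree > n do not affect the coefficient of t^n). *)
Definition poincare_coef (n : nat) : rat :=
  (\prod_(2 <= k < n.+1) \sum_(j < n.+1) ('X^(k * j) : {poly rat}))`_n
  + (n == 1%N)%:R.

(* Main.v *)
Require Import Defs.
From mathcomp Require Import all_boot all_algebra.
From mathcomp Require Import mpoly.
From mathcomp Require Import zify.
Set Implicit Arguments. Unset Strict Implicit. Unset Printing Implicit Defensive.
Import GRing.Theory.
Local Open Scope ring_scope.

Lemma whomogP (N n : nat) (p : {mpoly rat[N]}) :
  whomog n p <-> (forall m, p@_m != 0 -> wdeg m = n).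
Proof.
split.
- move=> /allP H m Hm; apply/eqP; apply: H; by rewrite mcoeff_msupp.
- move=> H; apply/allP => m; rewrite mcoeff_msupp => Hm; apply/eqP; exact: H.
Qed.

Lemma whomog0 (N n : nat) : whomog n (0 : {mpoly rat[N]}).
Proof. by apply/whomogP => m; rewrite mcoeff0 eqxx. Qed.

Lemma whomogD (N n : nat) (p q : {mpoly rat[N]}) :
  whomog n p -> whomog n q -> whomog n (p + q).
Proof.
move=> /whomogP Hp /whomogP Hq; apply/whomogP => m; rewrite mcoeffD.
case: (eqVneq p@_m 0) => [->|/Hp //]; rewrite add0r; exact: Hq.
Qed.

Lemma whomogZ (N n : nat) (c : rat) (p : {mpoly rat[N]}) :
  whomog n p -> whomog n (c *: p).
Proof.
move=> /whomogP Hp; apply/whomogP => m; rewrite mcoeffZ mulf_eq0 negb_or.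
by case/andP => _ /Hp.
Qed.

Lemma whomog_sum (N n : nat) (I : Type) (r : seq I) (P : pred I) (F : I -> {mpoly rat[N]}) :
  (forall i, P i -> whomog n (F i)) -> whomog n (\sum_(i <- r | P i) F i).
Proof.
move=> H; apply: (big_ind (whomog n)); [exact: whomog0|exact: whomogD|exact: H].
Qed.

Lemma whomogX (N : nat) (m : 'X_{1..N}) : whomog (wdeg m) ('X_[m] : {mpoly rat[N]}).
Proof. by rewrite /whomog msuppX /= eqxx. Qed.

Lemma wdegD (N : nat) (m1 m2 : 'X_{1..N}) : wdeg (m1 + m2)%MM = (wdeg m1 + wdeg m2)%N.
Proof. by rewrite /wdeg -big_split /=; apply: eq_bigr => i _; rewrite mnmDE mulnDr. Qed.

Lemma wdegU (N : nat) (j : 'I_N) : wdeg U_(j)%MM = j.+1.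
Proof.
rewrite /wdeg (bigD1 j) //= mnm1E eqxx muln1 big1 ?addn0 // => i /negbTE.
by rewrite mnm1E eq_sym => ->; rewrite muln0.
Qed.

Lemma wdegB1 (N : nat) (m : 'X_{1..N}) (i : 'I_N) : (m i != 0)%N ->
  wdeg (m - U_(i))%MM = (wdeg m - i.+1)%N.
Proof.
move=> Hi; rewrite -{2}(@submK _ U_(i) m) ?lep1mP // wdegD wdegU addnK //.
Qed.

Lemma wdeg_ge (N : nat) (m : 'X_{1..N}) (i : 'I_N) : (i.+1 * m i <= wdeg m)%N.
Proof. by rewrite /wdeg (bigD1 i) //= leq_addr. Qed.

Lemma dA_lin (N : nat) (a : rat) (p q : {mpoly rat[N]}) :
  dA (a *: p + q) = a *: dA p + dA q.
Proof.
rewrite /dA scaler_sumr -big_split /=; apply: eq_bigr => j _.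
rewrite scaler_sumr -big_split /=; apply: eq_bigr => i _.
by rewrite mderivD mderivZ mulrDr scalerAr.
Qed.

Lemma dA0 (N : nat) : dA (0 : {mpoly rat[N]}) = 0.
Proof. by rewrite /dA big1 // => j _; rewrite big1 // => i _; rewrite mderiv0 mulr0. Qed.

Lemma dA_sum (N : nat) (I : Type) (r : seq I) (P : pred I) (F : I -> {mpoly rat[N]}) :
  dA (\sum_(i <- r | P i) F i) = \sum_(i <- r | P i) dA (F i).
Proof.
have dAD : {morph (@dA N) : x y / x + y}.
  by move=> x y; have := dA_lin 1 x y; rewrite !scale1r.
exact: (big_morph _ dAD (dA0 N)).
Qed.

Lemma dAZ (N : nat) (a : rat) (p : {mpoly rat[N]}) : dA (a *: p) = a *: dA p.
Proof. by have := dA_lin a p 0; rewrite !addr0 dA0 addr0. Qed.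

Lemma dAX (N : nat) (m : 'X_{1..N}) :
  dA 'X_[m] = \sum_(j < N) \sum_(i < N | nat_of_ord i == j.+1)
      (m i)%:R *: ('X_[U_(j) + (m - U_(i))] : {mpoly rat[N]}).
Proof.
apply: eq_bigr => j _; apply: eq_bigr => i _.
by rewrite mderivX -scalerAr mpolyXD.
Qed.

Lemma dA_homog (N n : nat) (p : {mpoly rat[N]}) :
  whomog n p -> whomog n.-1 (dA p).
Proof.
move=> Hp; rewrite (mpolyE p) dA_sum; apply: whomog_sum => mu _.
case: (boolP (mu \in msupp p)) => Hmu; last first.
  by move: Hmu; rewrite mcoeff_msupp negbK => /eqP ->; rewrite scale0r dA0; exact: whomog0.
have /eqP Hw := allP Hp mu Hmu.
rewrite dAZ; apply: whomogZ; rewrite dAX; apply: whomog_sum => j _.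
apply: whomog_sum => i /eqP Hi.
case: (eqVneq (mu i) 0%N) => [->|Hnz]; first by rewrite scale0r; exact: whomog0.
apply: whomogZ.
have -> : n.-1 = wdeg (U_(j) + (mu - U_(i)))%MM.
  rewrite wdegD wdegU wdegB1 // Hw.
  have Hpos : (0 < mu i)%N by rewrite lt0n.
  have := leq_trans (leq_pmulr i.+1 Hpos) (wdeg_ge mu i).
  rewrite Hw Hi; lia.
exact: whomogX.
Qed.

Lemma dAX_small (N : nat) (m : 'X_{1..N}) : (wdeg m <= 1)%N ->
  dA ('X_[m] : {mpoly rat[N]}) = 0.
Proof.
move=> Hw; rewrite dAX big1 // => j _; rewrite big1 // => i /eqP Hi.
have : (i.+1 * m i <= 1)%N by apply: leq_trans (wdeg_ge m i) Hw.
rewrite Hi => H; have -> : m i = 0%N by move: H; lia.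
by rewrite scale0r.
Qed.

Lemma wdeg_shift (N : nat) (mu : 'X_{1..N}) (i j : 'I_N) :
  mu i != 0%N -> nat_of_ord i = j.+1 ->
  wdeg (U_(j) + (mu - U_(i)))%MM = (wdeg mu).-1.
Proof.
move=> Hnz Hi; rewrite wdegD wdegU wdegB1 //.
have Hpos : (0 < mu i)%N by rewrite lt0n.
have := leq_trans (leq_pmulr i.+1 Hpos) (wdeg_ge mu i).
rewrite Hi; lia.
Qed.

Definition top (N : nat) (m : 'X_{1..N}) : nat := \max_(i < N | m i != 0%N) i.+1.

Lemma top_ge (N : nat) (m : 'X_{1..N}) (i : 'I_N) : m i != 0%N -> (i.+1 <= top m)%N.
Proof. by move=> H; exact: (@leq_bigmax_cond _ (fun i : 'I_N => m i != 0%N) (fun i : 'I_N => i.+1) i H). Qed.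

Lemma top_le (N : nat) (m : 'X_{1..N}) : (top m <= N)%N.
Proof. by apply/bigmax_leqP => i _; exact: ltn_ord. Qed.

Lemma top_spec (N : nat) (m : 'X_{1..N}) (i0 : 'I_N) : m i0 != 0%N ->
  exists k : 'I_N, [/\ m k != 0%N, top m = k.+1 & forall i : 'I_N, (k < i)%N -> m i = 0%N].
Proof.
move=> H0.
have Hc : (0 < #|[pred i : 'I_N | m i != 0%N]|)%N.
  by apply/card_gt0P; exists i0.
have [k Hk Heq] := eq_bigmax_cond (fun i : 'I_N => i.+1) Hc.
exists k; split => //.
move=> i Hi; apply/eqP; apply: contraTT Hi => Hnz.
by have := top_ge Hnz; rewrite /top Heq -leqNgt.
Qed.

Definition Img (N n : nat) (q : {mpoly rat[N]}) : Prop :=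
  exists p, whomog n p /\ dA p = q.

Lemma Img0 (N n : nat) : Img n (0 : {mpoly rat[N]}).
Proof. exists 0; split; [exact: whomog0|exact: dA0]. Qed.

Lemma ImgD (N n : nat) (p q : {mpoly rat[N]}) : Img n p -> Img n q -> Img n (p + q).
Proof.
move=> [p1 [H1 <-]] [q1 [H2 <-]]; exists (p1 + q1); split; first exact: whomogD.
by have := dA_lin 1 p1 q1; rewrite !scale1r.
Qed.

Lemma ImgZ (N n : nat) (c : rat) (p : {mpoly rat[N]}) : Img n p -> Img n (c *: p).
Proof. move=> [p1 [H1 <-]]; exists (c *: p1); split; [exact: whomogZ|exact: dAZ]. Qed.

Lemma Img_sum (N n : nat) (I : Type) (r : seq I) (P : pred I) (F : I -> {mpoly rat[N]}) :
  (forall i, P i -> Img n (F i)) -> Img n (\sum_(i <- r | P i) F i).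
Proof. move=> H; apply: (big_ind (Img n)); [exact: Img0|exact: ImgD|exact: H]. Qed.

Lemma wdeg0 (N : nat) : wdeg (0%MM : 'X_{1..N}) = 0%N.
Proof. by rewrite /wdeg big1 // => i _; rewrite mnm0E muln0. Qed.

Lemma surjX (N n : nat) (hN : (n <= N)%N) (r : nat) (m : 'X_{1..N}) :
  (N - top m < r)%N -> wdeg m = n.-1 -> (0 < n.-1)%N -> Img n ('X_[m] : {mpoly rat[N]}).
Proof.
elim: r m => [//|r IH] m Hr Hw Hn.
have [i0 Hi0] : exists i0 : 'I_N, m i0 != 0%N.
  case: (boolP [exists i, m i != 0%N]) => [/existsP //|]; rewrite negb_exists => /forallP H.
  have Hm0 : m = 0%MM by apply/mnmP => i; rewrite mnm0E; apply/eqP; rewrite -[_ == _]negbK H.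
  by move: Hn; rewrite -Hw Hm0 wdeg0.
have [k [Hk Htop Hmax]] := top_spec Hi0.
have Hkw : (k.+1 <= n.-1)%N.
  have Hpos : (0 < m k)%N by rewrite lt0n.
  by have := leq_trans (leq_pmulr k.+1 Hpos) (wdeg_ge m k); rewrite Hw.
have Hk1 : (k.+1 < N)%N by lia.
pose k1 : 'I_N := Ordinal Hk1.
have mk1 : m k1 = 0%N by apply: Hmax => /=.
pose mu := ((m - U_(k)) + U_(k1))%MM.
have mu_k1 : mu k1 = 1%N by rewrite /mu mnmDE mnmBE !mnm1E mk1 eqxx sub0n.
have wmu : wdeg mu = n by rewrite /mu wdegD wdegB1 // wdegU /= Hw; lia.
have Hinner : \sum_(i < N | nat_of_ord i == k.+1)
    (mu i)%:R *: ('X_[U_(k) + (mu - U_(i))] : {mpoly rat[N]}) = 'X_[m].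
  rewrite (big_pred1 k1) /=; last by move=> i; rewrite /= -val_eqE.
  rewrite mu_k1 scale1r; congr 'X_[_]; apply/mnmP => l.
  rewrite /mu mnmDE mnmBE mnmDE mnmBE !mnm1E addnK.
  case: (eqVneq k l) => [<-|_]; last by rewrite add0n subn0.
  by rewrite add1n subn1 prednK // lt0n.
have Hd : dA ('X_[mu] : {mpoly rat[N]}) = 'X_[m] + \sum_(j < N | j != k)
    \sum_(i < N | nat_of_ord i == j.+1) (mu i)%:R *: ('X_[U_(j) + (mu - U_(i))] : {mpoly rat[N]}).
  by rewrite dAX (bigD1 k) //= Hinner.
have -> : ('X_[m] : {mpoly rat[N]}) = dA 'X_[mu] - \sum_(j < N | j != k)
    \sum_(i < N | nat_of_ord i == j.+1) (mu i)%:R *: ('X_[U_(j) + (mu - U_(i))] : {mpoly rat[N]}).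
  by rewrite Hd addrK.
apply: ImgD; first by exists 'X_[mu]; split => //; rewrite -wmu; exact: whomogX.
rewrite -scaleN1r; apply: ImgZ; apply: Img_sum => j Hj; apply: Img_sum => i /eqP Hi.
case: (eqVneq (mu i) 0%N) => [->|Hnz]; first by rewrite scale0r; exact: Img0.
apply: ImgZ; apply: IH; last by [].
- have Hm' : (U_(j) + (mu - U_(i)))%MM k1 != 0%N.
    rewrite mnmDE mnmBE mu_k1 !mnm1E.
    have -> : (i == k1) = false.
      apply/negbTE; rewrite -val_eqE /= Hi eqSS.
      by move: Hj; apply: contra => /eqP H; apply/eqP/val_inj.
    by rewrite subn0 addn1.
  have := top_ge Hm'; have := top_le (U_(j) + (mu - U_(i)))%MM; move: Hr; rewrite Htop /=; lia.
- by rewrite wdeg_shift // wmu.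
Qed.

Lemma surj (N n : nat) (hN : (n <= N)%N) (q : {mpoly rat[N]}) :
  (1 < n)%N -> whomog n.-1 q -> Img n q.
Proof.
move=> Hn Hq; rewrite (mpolyE q); apply: Img_sum => m _.
case: (boolP (m \in msupp q)) => Hm; last first.
  by move: Hm; rewrite mcoeff_msupp negbK => /eqP ->; rewrite scale0r; exact: Img0.
apply: ImgZ; apply: (@surjX N n hN (N - top m).+1) => //; last by lia.
by apply/eqP; exact: (allP Hq).
Qed.


Definition Ety (N n : nat) := {ffun 'I_N -> 'I_n.+1}.
Definition mon (N n : nat) (f : Ety N n) : 'X_{1..N} := [multinom (nat_of_ord (f i)) | i < N].
Definition Sw (N n w : nat) : {set Ety N n} := [set f | wdeg (mon f) == w].
Definition coords (N n w : nat) (p : {mpoly rat[N]}) : 'rV[rat]_#|Sw N n w| :=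
  \row_i p@_(mon (enum_val i)).
Arguments coords {N} n w p.
Definition polyv (N n w : nat) (v : 'rV[rat]_#|Sw N n w|) : {mpoly rat[N]} :=
  \sum_i v 0 i *: 'X_[mon (enum_val i)].

Lemma mon_inj (N n : nat) : injective (@mon N n).
Proof.
move=> f g H; apply/ffunP => i; apply/val_inj.
by have := congr1 (fun m : 'X_{1..N} => m i) H; rewrite /mon !mnmE.
Qed.

Lemma mon_surj (N n : nat) (m : 'X_{1..N}) : (wdeg m <= n)%N -> exists f : Ety N n, mon f = m.
Proof.
move=> Hw; exists [ffun i => inord (m i)]; apply/mnmP => i; rewrite /mon mnmE ffunE inordK //.
have := leq_trans (leq_pmull (m i) (ltn0Sn i)) (wdeg_ge m i); lia.
Qed.

Lemma wdeg_enum (N n w : nat) (i : 'I_#|Sw N n w|) : wdeg (mon (enum_val i)) = w.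
Proof. by have := enum_valP i; rewrite inE => /eqP. Qed.

Lemma coords_polyv (N n w : nat) (v : 'rV[rat]_#|Sw N n w|) : coords n w (polyv v) = v.
Proof.
apply/rowP => j; rewrite /coords /polyv mxE raddf_sum /=.
rewrite (bigD1 j) //= mcoeffZ mcoeffX eqxx mulr1 big1 ?addr0 //.
move=> i Hij; rewrite mcoeffZ mcoeffX.
case: eqP => [/mon_inj/enum_val_inj Heq|_]; last by rewrite mulr0.
by move: Hij; rewrite Heq eqxx.
Qed.

Lemma polyv_coords (N n w : nat) (p : {mpoly rat[N]}) : (w <= n)%N -> whomog w p ->
  polyv (coords n w p) = p.
Proof.
move=> Hwn /whomogP Hp; apply/mpolyP => m; rewrite /polyv raddf_sum /=.
case: (eqVneq p@_m 0) => [H0|Hnz].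
  rewrite H0 big1 // => i _; rewrite mcoeffZ mcoeffX mxE.
  by case: eqP => [->|_]; rewrite ?H0 ?mulr0 ?mul0r.
have Hw := Hp m Hnz.
have [f Hf] : exists f : Ety N n, mon f = m by apply: mon_surj; rewrite Hw.
have Hfin : f \in Sw N n w by rewrite inE Hf Hw.
rewrite (bigD1 (enum_rank_in Hfin f)) //= mcoeffZ mcoeffX mxE enum_rankK_in // Hf eqxx mulr1.
rewrite big1 ?addr0 // => i Hi; rewrite mcoeffZ mcoeffX.
case: eqP => [Heq|_]; last by rewrite mulr0.
have Hfe : enum_val i = f by apply: mon_inj; rewrite Heq Hf.
have Hie : i = enum_rank_in Hfin f by apply: enum_val_inj; rewrite enum_rankK_in.
by move: Hi; rewrite Hie eqxx.
Qed.

Lemma polyv_homog (N n w : nat) (v : 'rV[rat]_#|Sw N n w|) : whomog w (polyv v).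
Proof.
apply: whomog_sum => i _; apply: whomogZ; rewrite -{1}(wdeg_enum i); exact: whomogX.
Qed.

Lemma polyv_mul (N n w k : nat) (c : 'rV[rat]_k) (B : 'M[rat]_(k, #|Sw N n w|)) :
  polyv (c *m B) = \sum_(i < k) c 0 i *: polyv (row i B).
Proof.
rewrite /polyv; under eq_bigr do rewrite mxE scaler_suml.
rewrite exchange_big /=; apply: eq_bigr => i _; rewrite scaler_sumr.
by apply: eq_bigr => j _; rewrite mxE scalerA.
Qed.

Lemma polyv_inj (N n w : nat) : injective (@polyv N n w).
Proof. by move=> v1 v2 H; rewrite -(coords_polyv v1) H coords_polyv. Qed.

Lemma polyv0 (N n w : nat) : @polyv N n w 0 = 0.
Proof. by rewrite /polyv big1 // => i _; rewrite mxE scale0r. Qed.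

Definition Dmx (N n : nat) : 'M[rat]_(#|Sw N n n|, #|Sw N n n.-1|) :=
  \matrix_(i, j) (dA 'X_[mon (enum_val i)])@_(mon (enum_val j)).

Lemma dA_coords (N n : nat) (v : 'rV[rat]_#|Sw N n n|) :
  coords n n.-1 (dA (polyv v)) = v *m Dmx N n.
Proof.
apply/rowP => j; rewrite /coords /polyv !mxE dA_sum raddf_sum /=.
by apply: eq_bigr => i _; rewrite dAZ mcoeffZ mxE.
Qed.

Definition zf (N n : nat) (f : Ety N n) : bool :=
  [forall i, (nat_of_ord i == 0%N) ==> (nat_of_ord (f i) == 0%N)].
Definition Cz (N n : nat) : {set Ety N n} := [set f in Sw N n n | zf f].

Lemma wdeg_mon (N n : nat) (f : Ety N n) : wdeg (mon f) = (\sum_(i < N) i.+1 * f i)%N.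
Proof. by apply: eq_bigr => i _; rewrite mnmE. Qed.

Lemma mon_le (N n w : nat) (f : Ety N n) (i : 'I_N) : f \in Sw N n w -> (f i <= w)%N.
Proof.
rewrite inE => /eqP Hw; have := wdeg_ge (mon f) i; rewrite Hw /mon mnmE.
have := leq_pmull (f i) (ltn0Sn i); lia.
Qed.

Lemma card_rec (N n : nat) (hN : (n <= N)%N) (Hn : (0 < n)%N) :
  #|Sw N n n| = (#|Sw N n n.-1| + #|Cz N n|)%N.
Proof.
have H0 : (0 < N)%N by lia.
pose i0 : 'I_N := Ordinal H0.
have Hi0 : forall i : 'I_N, (i0 == i) = (nat_of_ord i == 0%N).
  by move=> i; rewrite -val_eqE /= eq_sym.
pose shift (f : Ety N n) : Ety N n := [ffun i => inord (f i + (nat_of_ord i == 0%N))].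
have shiftE : forall f i, f \in Sw N n n.-1 -> nat_of_ord (shift f i) = (f i + (nat_of_ord i == 0%N))%N.
  move=> f i Hf; rewrite ffunE inordK //; have := mon_le i Hf; case: (_ == _); lia.
rewrite -(cardsID [set f | zf f] (Sw N n n)) addnC; congr (_ + _)%N; last first.
  by apply: eq_card => f; rewrite !inE.
have -> : Sw N n n :\: [set f | zf f] = shift @: Sw N n n.-1.
  apply/setP => g; rewrite !inE; apply/idP/idP.
  - case/andP => Hz Hg.
    have [i Hi] : exists i : 'I_N, (nat_of_ord i == 0%N) && (nat_of_ord (g i) != 0%N).
      by move: Hz; rewrite negb_forall => /existsP [i]; rewrite negb_imply => Hi; exists i.
    case/andP: Hi => /eqP Hi Hgi.
    have Hii0 : i = i0 by apply/val_inj.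
    pose f : Ety N n := [ffun j => inord (g j - (nat_of_ord j == 0%N))].
    have fE : forall j, nat_of_ord (f j) = (g j - (nat_of_ord j == 0%N))%N.
      move=> j; rewrite ffunE inordK //; have := ltn_ord (g j); lia.
    have Hmf : mon f = (mon g - U_(i0))%MM.
      apply/mnmP => j; rewrite mnmBE !mnmE fE. by rewrite Hi0.
    have Hf : f \in Sw N n n.-1.
      rewrite inE Hmf wdegB1; last by rewrite /mon mnmE -Hii0.
      by move: Hg => /eqP ->; rewrite /= subn1.
    suff -> : g = shift f by apply: imset_f.
    apply/esym.
    apply/ffunP => j; apply/val_inj. rewrite /= shiftE // fE.
    case: (eqVneq (nat_of_ord j) 0%N) => Hj; last by rewrite subn0 addn0.
    have -> : j = i0 by apply/val_inj.
    rewrite -Hii0 subn1 addn1 prednK //; by rewrite lt0n.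
  - case/imsetP => f Hf ->.
    have Hmf : mon (shift f) = (mon f + U_(i0))%MM.
      by apply/mnmP => j; rewrite mnmDE !mnmE /= shiftE // Hi0.
    apply/andP; split.
      rewrite negb_forall; apply/existsP; exists i0; rewrite negb_imply /=.
      by rewrite shiftE //= addn1.
    rewrite Hmf wdegD wdegU /=; move: Hf; rewrite inE => /eqP ->; lia.
rewrite card_in_imset // => f g Hf Hg Heq; apply/ffunP => j; apply/val_inj.
have := congr1 (fun h : Ety N n => nat_of_ord (h j)) Heq; rewrite /= !shiftE //.
exact: addIn.
Qed.

Lemma prodX (I : finType) (P : pred I) (G : I -> nat) :
  \prod_(i | P i) ('X^(G i) : {poly rat}) = 'X^(\sum_(i | P i) G i).
Proof. by elim/big_rec2: _ => [|i a b _ ->]; rewrite ?expr0 // exprD. Qed.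

Lemma sum_bool_card (T : finType) (A : pred T) (c : pred T) :
  (\sum_(x in A) (c x : nat))%N = #|[pred x in A | c x]|.
Proof.
rewrite -sum1_card [RHS]big_mkcond [LHS]big_mkcond; apply: eq_bigr => x _.
by rewrite !inE; case: (x \in A); case: (c x).
Qed.

Lemma poincare_card (N n : nat) (hN : (n <= N)%N) :
  poincare_coef n = (#|Cz N n|)%:R + (n == 1%N)%:R.
Proof.
rewrite /poincare_coef; congr (_ + _).
rewrite big_add1 /= big_geq_mkord /=.
rewrite (big_ord_widen_cond N (fun i => true && (1 <= i)%N)
   (fun i => \sum_(j < n.+1) ('X^(i.+1 * j) : {poly rat}))) //.
rewrite (big_distr_big ord0) /= coef_sum.
under eq_bigr do rewrite prodX coefXn.
rewrite -natr_sum sum_bool_card; congr (_%:R); apply: eq_card => f.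
rewrite !inE.
have Hsplit := wdeg_mon f; rewrite (bigID (fun i : 'I_N => (0 < i < n)%N)) /= in Hsplit.
apply/andP/andP => [[/forallP Hfa /eqP Hs] | [/eqP Hw Hz]].
  have Hz0 : forall x : 'I_N, ~~ (0 < x < n)%N -> nat_of_ord (f x) = 0%N.
    move=> x Hx; have := Hfa x; rewrite /in_mem /= (negbTE Hx) => /eqP -> //.
  split.
    rewrite Hsplit -Hs big1 ?addn0 // => i Hi; by rewrite Hz0 ?muln0.
  by apply/forallP => x; apply/implyP => /eqP Hx0; rewrite Hz0 // Hx0.
have Hz0 : forall x : 'I_N, ~~ (0 < x < n)%N -> nat_of_ord (f x) = 0%N.
  move=> x Hx; case: (eqVneq (nat_of_ord x) 0%N) => Hx0.
    by move/forallP: Hz => /(_ x); rewrite Hx0 /= => /eqP.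
  have Hxn : (n <= x)%N by move: Hx Hx0; lia.
  have := wdeg_ge (mon f) x; rewrite Hw /mon mnmE.
  have := leq_pmull (f x) (ltn0Sn x).
  case: (nat_of_ord (f x)) => // k; rewrite mulnS; lia.
split.
  apply/forallP => x; rewrite /in_mem /=; case: ifP => // Hx.
  by apply/eqP/val_inj; rewrite /= Hz0 ?Hx.
have H2 : (\sum_(i < N | ~~ (0 < i < n)%N) i.+1 * f i)%N = 0%N.
  by apply: big1 => i Hi; rewrite Hz0 ?muln0.
by rewrite H2 addn0 Hw in Hsplit; rewrite -Hsplit.
Qed.

Lemma Sw0 (N n : nat) (f : Ety N n) (i : 'I_N) : f \in Sw N n 0 -> nat_of_ord (f i) = 0%N.
Proof. by move=> Hf; have := mon_le i Hf; rewrite leqn0 => /eqP. Qed.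

Lemma card_Sw0 (N n : nat) : #|Sw N n 0| = 1%N.
Proof.
have -> : Sw N n 0 = [set [ffun => ord0]].
  apply/setP => f; rewrite in_set1; apply/idP/idP => [Hf|/eqP ->].
    by apply/eqP/ffunP => i; apply/val_inj; rewrite ffunE /= Sw0.
  by rewrite inE wdeg_mon big1 // => i _; rewrite ffunE muln0.
exact: cards1.
Qed.

Lemma Cz0 (N : nat) : Cz N 0 = Sw N 0 0.
Proof.
apply/setP => f; rewrite /Cz inE; case: (boolP (f \in Sw N 0 0)) => //= Hf.
by apply/forallP => i; apply/implyP => _; rewrite Sw0.
Qed.

Lemma coords0 (N n w : nat) : coords n w (0 : {mpoly rat[N]}) = 0.
Proof. by apply/rowP => j; rewrite !mxE mcoeff0. Qed.

Lemma Jchar (N n : nat) (hN : (n <= N)%N) (p : {mpoly rat[N]}) :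
  Jdeg n p <-> whomog n p /\ coords n n p *m Dmx N n = 0.
Proof.
split.
  move=> [Hw Hd]; split => //.
  by rewrite -dA_coords polyv_coords // Hd coords0.
move=> [Hw Hv]; split => //.
rewrite -(@polyv_coords N n n.-1 (dA p)) ?leq_pred ?dA_homog //.
by rewrite -{1}(polyv_coords (leqnn n) Hw) dA_coords Hv polyv0.
Qed.

Theorem mainTheorem10 (n N : nat) (hN : (n <= N)%N) :
  exists k : nat, has_dim (@Jdeg N n) k /\ (k%:R : rat) = poincare_coef n.
Proof.
pose D := Dmx N n.
pose B := row_base (kermx D).
exists (\rank (kermx D)); split.
  exists (fun i => polyv (row i B)); split.
  - move=> i; apply/Jchar => //; split; first exact: polyv_homog.
    rewrite coords_polyv; apply/sub_kermxP.
    by apply: (submx_trans (row_sub i B)); rewrite eq_row_base submx_refl.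
  - move=> c Hc i.
    pose cr : 'rV[rat]_(\rank (kermx D)) := \row_i c i.
    have H1 : polyv (cr *m B) = polyv (0 *m B).
      rewrite mul0mx polyv0 polyv_mul -[RHS]Hc.
      by apply: eq_bigr => j _; rewrite mxE.
    have := row_free_inj (row_base_free (kermx D)) (polyv_inj H1).
    by move/rowP/(_ i); rewrite !mxE.
  - move=> p /(Jchar hN) [Hw Hv].
    have : (coords n n p <= B)%MS by rewrite eq_row_base; apply/sub_kermxP.
    case/submxP => c Hc; exists (fun i => c 0 i).
    by rewrite -(polyv_coords (leqnn n) Hw) Hc polyv_mul.
rewrite mxrank_ker (poincare_card hN).
case: (ltnP 1 n) => Hn.
  have Hfull : row_full D.
    rewrite -sub1mx; apply/row_subP => j; apply/submxP.
    have [p [Hp Hdp]] := surj hN Hn (polyv_homog (row j (1%:M : 'M[rat]_#|Sw N n n.-1|))).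
    exists (coords n n p).
    by rewrite -dA_coords polyv_coords // Hdp coords_polyv.
  move: Hfull; rewrite /row_full => /eqP ->.
  rewrite (card_rec hN) ?addKn; last by lia.
  have Hn1 : (n == 1%N) = false by apply/negbTE; lia.
  by rewrite Hn1 addr0.
have HD : D = 0.
  apply/matrixP => i j; rewrite !mxE dAX_small ?mcoeff0 // wdeg_enum //.
rewrite HD mxrank0 subn0.
case: n hN Hn D B HD => [|[|//]] hN _ _ _ _.
  by rewrite -Cz0 addr0.
by rewrite (card_rec hN) // card_Sw0 natrD addrC.
Qed.
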